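(* Let $G$ be an amenable Hausdorff topological group, locally compact or SIN, acting continuously by isometries on a pointed metric space $(\mathcal{M},d,0)$ with bounded orbits; let $M$ be a bi-invariant mean on $G$ and $X=\mathcal{F}(\mathcal{M})$. Suppose $Q:X^{**}\to X^{**}$ is a bounded linear projection with $Q[X^{**}]=\kappa_X(X)$ and $T_g^{**}(\ker Q)\subset\ker Q$ for every $g\in G$. Let $R_G:X\to X^{**}$, $R_G(\mu)(f)=M(g\mapsto f(T_g\mu))$, let $P_G:=\kappa_X^{-1}\circ Q\circ R_G$ (a projection onto $I_G=\{\mu\in X: T_g\mu=\mu\ \forall g\}$), and let $\Psi:\mathrm{Lip}_0(\mathcal{M}/G)\to\mathrm{Lip}_0^G(\mathcal{M})$, $\Psi(f)(x)=f([Gx])$. If $Y\subset\mathrm{Lip}_0(\mathcal{M}/G)$ separates the points of $\mathcal{F}(\mathcal{M}/G)$ and $\ker P_G\subset\Psi(Y)_\perp$, then $\ker P_G=\mathrm{Lip}_0^G(\mathcal{M})_\perp$ and $P_G[X]$ is isomorphic to $\mathcal{F}(\mathcal{M}/G)$ via a linear isomorphism $T:\mathcal{F}(\mathcal{M}/G)\to P_G[X]$ with $T(\delta([Gx]))=P_G(\delta(x))$ whose inverse is the restriction to $P_G[X]$ of the norm-at-most-one operator $S:\mathcal{F}(\mathcal{M})\to\mathcal{F}(\mathcal{M}/G)$, $S(\delta(x))=\delta([Gx])$, and $\|T\|\le\|Q\|$. In particular $\mathcal{F}(\mathcal{M}/G)$ is isomorphic to a complemented subspace of $\mathcal{F}(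\mathcal{M})$.
   Context: $\mathrm{Lip}_0(N)$: real Lipschitz functions on a pointed metric space $N$ vanishing at the base point, normed by the Lipschitz constant; $\delta(m)$ evaluation at $m$; $\mathcal{F}(N)=\overline{\mathrm{span}}\{\delta(m):m\in N\}\subset\mathrm{Lip}_0(N)^*$, so $\mathcal{F}(N)^*=\mathrm{Lip}_0(N)$. $\kappa_X:X\to X^{**}$ is the canonical embedding; for $A\subset X^*$, $A_\perp=\{x\in X:a(x)=0\ \forall a\in A\}$. For $g\in G$, $T_g$ is the linear isometry of $\mathcal{F}(\mathcal{M})$ with $T_g\delta(m)=\delta(gm)-\delta(g0)$. $\mathcal{M}/G=\{[Gx]:x\in\mathcal{M}\}$ with $[Gx]=\overline{Gx}$, metric $d_{\mathcal{M}/G}([Gx],[Gy])=\inf\{d(x',y'):x'\in[Gx],y'\in[Gy]\}$ (the Hausdorff distance), base point $[G0]$. $\mathrm{Lip}_0^G(\mathcal{M})=\{f\in\mathrm{Lip}_0(\mathcal{M}):f(gx)=f(x)\ \forall g,x\}$. ''$Y$ separates the points of $\mathcal{F}(\mathcal{M}/G)$'': for every nonzero $\mu\in\mathcal{F}(\mathcal{M}/G)$ some $f\in Y$ has $f(\mu)\ne0$. A bi-invariant mean is a positive normalized linear functional invariant under left and right translations (on bounded uniformly continuous functions for SIN $G$; on $L_\infty(G)$ for locally compact amenable $G$). SIN: every neighborhood $U$ of $e$ contains a neighborhood $V$ of $e$ with $gVg^{-1}=V$ for all $g$. *)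

(* Defs.v *)
From HB Require Import structures.
From mathcomp Require Import all_boot all_order all_algebra.
From mathcomp Require Import all_classical all_reals all_analysis.
Set Implicit Arguments. Unset Strict Implicit. Unset Printing Implicit Defensive.
Import Order.TTheory GRing.Theory Num.Theory numFieldNormedType.Exports.
Local Open Scope ring_scope.
Local Open Scope classical_set_scope.

(* Conventions:
   - a pointed metric space is a carrier [T], a metric [d] and a base point [x0];
   - Lip_0(T)^* (which is X^** for X = F(T), since X^* = Lip_0(T)) is modelled by
     functionals [phi : (T -> R) -> R] that are linear and bounded on Lip_0
     functions and vanish on non-Lip_0 functions (a canonical representative);
   - F(T) is the norm closure of span{delta m} inside it; kappa_X is the inclusion. *)

Section Metric.
Context {R : realType} {T : Type}.

Definition is_metric (d : T -> T -> R) : Prop :=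
  (forall x y, 0 <= d x y) /\ (forall x y, d x y = 0 <-> x = y) /\
  (forall x y, d x y = d y x) /\ (forall x y z, d x z <= d x y + d y z).

End Metric.

Section Lip.
Context {R : realType} {T : Type} (d : T -> T -> R) (x0 : T).

Definition lip0 (f : T -> R) : Prop :=
  f x0 = 0 /\ exists L : R, forall x y, `|f x - f y| <= L * d x y.

Definition lipnorm (f : T -> R) : R :=
  sup [set r | exists x y, x <> y /\ r = `|f x - f y| / d x y].

Definition dual_elt (phi : (T -> R) -> R) : Prop :=
  (forall f, ~ lip0 f -> phi f = 0) /\
  (forall (a : R) f g, lip0 f -> lip0 g ->
      phi (fun x => a * f x + g x) = a * phi f + phi g) /\
  (exists C : R, forall f, lip0 f -> `|phi f| <= C * lipnorm f).

Definition dnorm (phi : (T -> R) -> R) : R :=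
  sup [set r | exists f, lip0 f /\ lipnorm f <= 1 /\ r = `|phi f|].

Definition delta (m : T) : (T -> R) -> R :=
  fun f => if `[< lip0 f >] then f m else 0.

Definition span_delta (psi : (T -> R) -> R) : Prop :=
  exists n (a : 'I_n -> R) (m : 'I_n -> T),
    psi = fun f => \sum_(i < n) a i * delta (m i) f.

Definition free_elt (mu : (T -> R) -> R) : Prop :=
  dual_elt mu /\
  forall eps : R, 0 < eps -> exists psi, span_delta psi /\
     dnorm (fun f => mu f - psi f) < eps.

Definition perp (A : set (T -> R)) : set ((T -> R) -> R) :=
  [set mu | free_elt mu /\ forall f, A f -> mu f = 0].

Definition opnorm_dual (Q : ((T -> R) -> R) -> ((T -> R) -> R)) : R :=
  sup [set r | exists phi, dual_elt phi /\ dnorm phi <= 1 /\ r = dnorm (Q phi)].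

End Lip.

Definition lin_on {R : realType} {A B : Type} (P : set ((A -> R) -> R))
  (F : ((A -> R) -> R) -> ((B -> R) -> R)) : Prop :=
  forall (a : R) u v, P u -> P v ->
    F (fun f => a * u f + v f) = (fun f => a * F u f + F v f).

Section Group.
Context {R : realType} (G : topologicalType) (mul : G -> G -> G) (inv : G -> G) (e : G).

Definition is_topgroup : Prop :=
  (forall a b c, mul a (mul b c) = mul (mul a b) c) /\
  (forall a, mul e a = a) /\ (forall a, mul (inv a) a = e) /\
  continuous (fun p : G * G => mul p.1 p.2) /\ continuous inv.

Definition SIN : Prop :=
  forall U, nbhs e U -> exists V, nbhs e V /\ V `<=` U /\
    forall g, [set mul (mul g v) (inv g) | v in V] = V.

Definition bounded_fun (phi : G -> R) : Prop := exists C : R, forall g, `|phi g| <= C.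

Definition bcont (phi : G -> R) : Prop := continuous phi /\ bounded_fun phi.

Definition buc (phi : G -> R) : Prop :=
  bounded_fun phi /\
  forall eps : R, 0 < eps -> exists U, nbhs e U /\ forall g h, U h ->
     `|phi (mul g h) - phi g| < eps /\ `|phi (mul h g) - phi g| < eps.

Definition bimean (D : set (G -> R)) (M : (G -> R) -> R) : Prop :=
  (forall (a : R) phi psi, D phi -> D psi ->
      M (fun g => a * phi g + psi g) = a * M phi + M psi) /\
  (forall phi, D phi -> (forall g, 0 <= phi g) -> 0 <= M phi) /\
  M (fun _ => 1) = 1 /\
  (forall phi h, D phi -> M (fun g => phi (mul h g)) = M phi) /\
  (forall phi h, D phi -> M (fun g => phi (mul g h)) = M phi).

End Group.

Section Action.
Context {R : realType} (G : topologicalType) (mul : G -> G -> G) (e : G)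
  {T : Type} (d : T -> T -> R) (x0 : T) (act : G -> T -> T).

Definition isom_action : Prop :=
  (forall x, act e x = x) /\
  (forall g h x, act (mul g h) x = act g (act h x)) /\
  (forall g x y, d (act g x) (act g y) = d x y) /\
  (forall g x (eps : R), 0 < eps -> exists U, nbhs g U /\ exists del : R, 0 < del /\
      forall h y, U h -> d y x < del -> d (act h y) (act g x) < eps) /\
  (forall x, exists C : R, forall g, d (act g x) x <= C).

Definition oclass (x : T) : set T :=
  [set y | forall eps : R, 0 < eps -> exists g, d y (act g x) < eps].

Definition quot_pts : Type := {A : set T | exists x, A = oclass x}.

Definition cls (x : T) : quot_pts := exist _ (oclass x) (ex_intro _ x erefl).

Definition dq (A B : quot_pts) : R :=
  inf [set r | exists x y, proj1_sig A x /\ proj1_sig B y /\ r = d x y].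

Definition lip0G (f : T -> R) : Prop := lip0 d x0 f /\ forall g x, f (act g x) = f x.

Definition Psi (f : quot_pts -> R) : T -> R := fun x => f (cls x).

Definition Tstar (g : G) (f : T -> R) : T -> R := fun m => f (act g m) - f (act g x0).

(* T_g^** on X^** (restricts to T_g on X) *)
Definition Tdd (g : G) (phi : (T -> R) -> R) : (T -> R) -> R :=
  fun f => if `[< lip0 d x0 f >] then phi (Tstar g f) else 0.

Definition RG (M : (G -> R) -> R) (mu : (T -> R) -> R) : (T -> R) -> R :=
  fun f => if `[< lip0 d x0 f >] then M (fun g => Tdd g mu f) else 0.

(* P_G = kappa^-1 o Q o R_G (kappa is the inclusion) *)
Definition PG (Q : ((T -> R) -> R) -> ((T -> R) -> R)) (M : (G -> R) -> R)
  (mu : (T -> R) -> R) : (T -> R) -> R := Q (RG M mu).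

End Action.

Arguments dq {R G T} d act _ _.
Arguments Psi {R G T} d act _ _.

(* Main.v *)
Require Import Defs.
From HB Require Import structures.
From mathcomp Require Import all_boot all_order all_algebra.
From mathcomp Require Import all_classical all_reals all_analysis.
From mathcomp Require Import ring lra.
Import Order.TTheory GRing.Theory Num.Theory numFieldNormedType.Exports.
Local Open Scope ring_scope.
Local Open Scope classical_set_scope.

Module L1.
Set Implicit Arguments. Unset Strict Implicit. Unset Printing Implicit Defensive.

Section LipA.
Context {R : realType} {T : Type} {d : T -> T -> R} {x0 : T}.
Hypothesis dge0 : forall x y, 0 <= d x y.

Lemma lip_hasub f : lip0 d x0 f ->
  has_ubound [set r | exists x y, x <> y /\ r = `|f x - f y| / d x y].
Proof.
case=> _ [L HL]; exists `|L| => r [x [y [_ ->]]].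
have [d0|dp] := eqVneq (d x y) 0.
  by rewrite d0 invr0 mulr0.
have dpos : 0 < d x y by rewrite lt0r dp dge0.
rewrite ler_pdivrMr //; apply: le_trans (HL x y) _.
by rewrite ler_wpM2r ?dge0 // ler_norm.
Qed.

Lemma lipnorm_ge0 f : 0 <= lipnorm d f.
Proof.
rewrite /lipnorm; set E := [set r | _].
have [hs|nhs] := pselect (has_sup E); last by rewrite sup_out.
case: hs => [[r Er] hu]; apply: le_trans (sup_upper_bound (conj (ex_intro _ r Er) hu) Er).
case: Er => x [y [_ ->]]; by rewrite divr_ge0 ?dge0.
Qed.

Lemma lip_bound f : lip0 d x0 f -> forall x y, `|f x - f y| <= lipnorm d f * d x y.
Proof.
move=> hf x y; have [L HL] := proj2 hf.
have [d0|dp] := eqVneq (d x y) 0.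
  have := HL x y; rewrite d0 mulr0 => h; rewrite mulr0.
  by apply: le_trans h _.
have dpos : 0 < d x y by rewrite lt0r dp dge0.
have [exy|nxy] := pselect (x = y).
  by rewrite exy subrr normr0 mulr_ge0 ?lipnorm_ge0 ?dge0.
rewrite -ler_pdivrMr //.
have hu := lip_hasub hf.
apply: ub_le_sup => //; exists x, y; split => //.
Qed.

Lemma lipnorm_le f L : 0 <= L -> (forall x y, `|f x - f y| <= L * d x y) ->
  lipnorm d f <= L.
Proof.
move=> L0 HL; rewrite /lipnorm; set E := [set r | _].
have [ne|e0] := pselect (E !=set0); last first.
  have -> : E = set0 by apply/eqP/negPn/negP => /set0P.
  by rewrite sup0.
apply: ge_sup => // r [x [y [_ ->]]].
have [d0|dp] := eqVneq (d x y) 0; first by rewrite d0 invr0 mulr0.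
have dpos : 0 < d x y by rewrite lt0r dp dge0.
by rewrite ler_pdivrMr.
Qed.

End LipA.

End L1.
Import L1.

Module L2.
Set Implicit Arguments. Unset Strict Implicit. Unset Printing Implicit Defensive.

Section DualA.
Context {R : realType} {T : Type} {d : T -> T -> R} {x0 : T}.
Hypothesis dge0 : forall x y, 0 <= d x y.

Notation lip0 := (lip0 d x0).
Notation lipnorm := (lipnorm d).
Notation dual := (dual_elt d x0).
Notation dnorm := (dnorm d x0).

Lemma lip0_0 : lip0 (fun _ => 0).
Proof. by split => //; exists 0 => x y; rewrite subrr normr0 mul0r. Qed.

Lemma lip0_lin (a : R) f g : lip0 f -> lip0 g -> lip0 (fun x => a * f x + g x).
Proof.
move=> [f0 [L HL]] [g0 [K HK]]; split; first by rewrite f0 g0 mulr0 addr0.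
exists (`|a| * `|L| + `|K|) => x y.
have -> : a * f x + g x - (a * f y + g y) = a * (f x - f y) + (g x - g y) by ring.
apply: le_trans (ler_normD _ _) _; rewrite mulrDl normrM -mulrA.
apply: lerD.
  apply: ler_wpM2l => //; apply: le_trans (HL x y) _.
  by rewrite ler_wpM2r ?dge0 ?ler_norm.
by apply: le_trans (HK x y) _; rewrite ler_wpM2r ?dge0 ?ler_norm.
Qed.

Lemma lipnorm0 : lipnorm (fun _ : T => 0) = 0.
Proof.
apply/eqP; rewrite eq_le lipnorm_ge0 // andbT.
by apply: lipnorm_le => // x y; rewrite subrr normr0 mul0r.
Qed.

Lemma lip0_zero f : lip0 f -> lipnorm f = 0 -> f = (fun _ => 0).
Proof.
move=> hf h0; apply: funext => x.
have := lip_bound dge0 hf x x0; rewrite h0 mul0r (proj1 hf) subr0.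
by rewrite normr_le0 => /eqP.
Qed.

Lemma dual0 phi : dual phi -> phi (fun _ => 0) = 0.
Proof.
move=> [_ [hl _]]; have := hl 1 _ _ lip0_0 lip0_0.
have -> : (fun x : T => 1 * 0 + 0) = (fun _ => (0:R)) by apply: funext => x; rewrite mulr0 addr0.
by move=> h; lra.
Qed.

Lemma dual_scale phi (a : R) f : dual phi -> lip0 f -> phi (fun x => a * f x) = a * phi f.
Proof.
move=> hp hf; have := (proj1 (proj2 hp)) a _ _ hf lip0_0.
have -> : (fun x => a * f x + 0) = (fun x => a * f x) by apply: funext => x; rewrite addr0.
by rewrite dual0 // addr0.
Qed.

Lemma dnorm_hasub phi : dual phi ->
  has_ubound [set r | exists f, lip0 f /\ lipnorm f <= 1 /\ r = `|phi f|].
Proof.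
move=> [_ [_ [C HC]]]; exists `|C| => r [f [hf [h1 ->]]].
apply: le_trans (HC f hf) _.
apply: le_trans (ler_norm _) _; rewrite normrM.
rewrite -[X in _ <= X]mulr1 ler_wpM2l //.
by rewrite ger0_norm ?lipnorm_ge0.
Qed.

Lemma dnorm_ge0 phi : 0 <= dnorm phi.
Proof.
rewrite /Defs.dnorm; set E := [set r | _].
have E0 : E `|phi (fun _ => 0)| by exists (fun _ => 0); rewrite lipnorm0 ler01; split => //; exact: lip0_0.
have [hs|nhs] := pselect (has_sup E); last by rewrite sup_out.
by apply: le_trans (sup_upper_bound hs E0).
Qed.

Lemma dnorm_bound phi f : dual phi -> lip0 f -> `|phi f| <= dnorm phi * lipnorm f.
Proof.
move=> hp hf.
have [L0|Lp] := eqVneq (lipnorm f) 0.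
  by rewrite L0 mulr0 (lip0_zero hf L0) dual0 // normr0.
have Lpos : 0 < lipnorm f by rewrite lt0r Lp lipnorm_ge0.
set g := fun x => (lipnorm f)^-1 * f x.
have hg : lip0 g by have := lip0_lin (lipnorm f)^-1 hf lip0_0; rewrite /g;
  congr lip0; apply: funext => x; rewrite addr0.
have g1 : lipnorm g <= 1.
  apply: lipnorm_le => // x y; rewrite /g -mulrBr normrM mul1r ger0_norm ?invr_ge0 ?lipnorm_ge0 //.
  by rewrite ler_pdivrMl // (lip_bound dge0 hf).
have : `|phi g| <= dnorm phi.
  by apply: ub_le_sup; [exact: dnorm_hasub | exists g].
rewrite /g dual_scale // normrM ger0_norm ?invr_ge0 ?lipnorm_ge0 //.
by rewrite ler_pdivrMl // mulrC.
Qed.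

Lemma dnorm_le phi c : 0 <= c ->
  (forall f, lip0 f -> lipnorm f <= 1 -> `|phi f| <= c) -> dnorm phi <= c.
Proof.
move=> c0 H; apply: ge_sup.
  exists `|phi (fun _ => 0)|; exists (fun _ => 0); rewrite lipnorm0 ler01; split => //; exact: lip0_0.
by move=> r [f [hf [h1 ->]]]; apply: H.
Qed.

Lemma dual_lin (a : R) u v : dual u -> dual v -> dual (fun f => a * u f + v f).
Proof.
move=> [u0 [ul [Cu HCu]]] [v0 [vl [Cv HCv]]]; split.
  by move=> f nf; rewrite u0 // v0 // mulr0 addr0.
split.
  move=> b f g hf hg; rewrite ul // vl //; ring.
exists (`|a| * `|Cu| + `|Cv|) => f hf.
have l0 := lipnorm_ge0 dge0 f.
apply: le_trans (ler_normD _ _) _; rewrite mulrDl normrM -mulrA; apply: lerD.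
  apply: ler_wpM2l => //; apply: le_trans (HCu f hf) _.
  by rewrite ler_wpM2r // ler_norm.
by apply: le_trans (HCv f hf) _; rewrite ler_wpM2r // ler_norm.
Qed.

Lemma dual_ext u v : dual u -> dual v -> (forall f, lip0 f -> u f = v f) -> u = v.
Proof.
move=> [u0 _] [v0 _] H; apply: funext => f.
have [hf|nf] := pselect (lip0 f); first exact: H.
by rewrite u0 // v0.
Qed.

Lemma le_eps_eq0 (x : R) : (forall e : R, 0 < e -> `|x| <= e) -> x = 0.
Proof.
move=> H; apply/eqP; rewrite -normr_le0.
apply/ler_addgt0Pr => e he; rewrite add0r; exact: H.
Qed.

End DualA.

End L2.
Import L2.

Module L3.
Set Implicit Arguments. Unset Strict Implicit. Unset Printing Implicit Defensive.

Section FreeA.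
Context {R : realType} {T : Type} {d : T -> T -> R} {x0 : T}.
Hypothesis dge0 : forall x y, 0 <= d x y.

Notation lip0 := (lip0 d x0).
Notation lipnorm := (lipnorm d).
Notation dual := (dual_elt d x0).
Notation dnorm := (dnorm d x0).
Notation free := (free_elt d x0).
Notation delta := (delta d x0).
Let dual_lin := @dual_lin R T d x0 dge0.
Let lip0_lin := @lip0_lin R T d x0 dge0.
Let lipnorm0 := @lipnorm0 R T d dge0.
Let lip0_zero := @lip0_zero R T d x0 dge0.
Let dnorm_ge0 := @dnorm_ge0 R T d x0 dge0.
Let dnorm_le := @dnorm_le R T d x0 dge0.

Lemma deltaE m f : lip0 f -> delta m f = f m.
Proof. by move=> hf; rewrite /Defs.delta asboolT. Qed.

Lemma deltaN m f : ~ lip0 f -> delta m f = 0.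
Proof. by move=> hf; rewrite /Defs.delta asboolF. Qed.

Lemma dual_delta m : dual (delta m).
Proof.
split; first exact: deltaN.
split.
  by move=> a f g hf hg; rewrite !deltaE //; apply: lip0_lin.
exists (d m x0) => f hf; rewrite deltaE // -[f m]subr0 -(proj1 hf).
by rewrite mulrC; apply: (lip_bound dge0 hf).
Qed.

Lemma dual_zero : dual (fun _ => 0).
Proof.
split => //; split; first by move=> *; rewrite mulr0 addr0.
by exists 0 => f _; rewrite normr0 mul0r.
Qed.

Lemma dual_big n (F : 'I_n -> (T -> R) -> R) : (forall i, dual (F i)) ->
  dual (fun f => \sum_(i < n) F i f).
Proof.
elim: n F => [|n IH] F HF.
  have -> : (fun f => \sum_(i < 0) F i f) = (fun _ => 0) by apply: funext => f; rewrite big_ord0.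
  exact: dual_zero.
have -> : (fun f => \sum_(i < n.+1) F i f) =
   (fun f => 1 * (\sum_(i < n) F (widen_ord (leqnSn n) i) f) + F ord_max f).
  by apply: funext => f; rewrite big_ord_recr mul1r.
apply: dual_lin => //; exact: IH.
Qed.

Lemma dual_span psi : span_delta d x0 psi -> dual psi.
Proof.
move=> [n [a [m ->]]]; apply: dual_big => i.
have -> : (fun f => a i * delta (m i) f) = (fun f => a i * delta (m i) f + (fun _ => 0) f) by apply: funext => f; rewrite addr0.
apply: dual_lin; [exact: dual_delta | exact: dual_zero].
Qed.

Lemma span_eval n (a : 'I_n -> R) (m : 'I_n -> T) f : lip0 f ->
  \sum_(i < n) a i * delta (m i) f = \sum_(i < n) a i * f (m i).
Proof. by move=> hf; apply: eq_bigr => i _; rewrite deltaE. Qed.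

Lemma span_lin (b : R) u v : span_delta d x0 u -> span_delta d x0 v ->
  span_delta d x0 (fun f => b * u f + v f).
Proof.
move=> [n [a [m ->]]] [k [c [p ->]]].
exists (n + k)%N, (fun i => match fintype.split i with inl j => b * a j | inr j => c j end),
  (fun i => match fintype.split i with inl j => m j | inr j => p j end).
apply: funext => f; rewrite big_split_ord /= big_distrr /=; congr (_ + _);
  apply: eq_bigr => i _.
  by rewrite (unsplitK (inl i)) mulrA.
by rewrite (unsplitK (inr i)).
Qed.

Lemma span_zero : span_delta d x0 (fun _ => 0).
Proof. by exists 0%N, (fun _ => 0), (fun _ => x0); apply: funext => f; rewrite big_ord0. Qed.

Lemma span_delta1 x : span_delta d x0 (delta x).
Proof.
exists 1%N, (fun _ => 1), (fun _ => x); apply: funext => f.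
by rewrite big_ord1 mul1r.
Qed.

Lemma dnorm_lin (a : R) u v : dual u -> dual v ->
  dnorm (fun f => a * u f + v f) <= `|a| * dnorm u + dnorm v.
Proof.
move=> hu hv; apply: dnorm_le => //.
  by rewrite addr_ge0 ?mulr_ge0 ?dnorm_ge0.
move=> f hf h1; apply: le_trans (ler_normD _ _) _; rewrite normrM.
apply: lerD.
  apply: ler_wpM2l => //; apply: le_trans (dnorm_bound dge0 hu hf) _.
  by rewrite -[X in _ <= X]mulr1 ler_wpM2l ?dnorm_ge0.
apply: le_trans (dnorm_bound dge0 hv hf) _.
by rewrite -[X in _ <= X]mulr1 ler_wpM2l ?dnorm_ge0.
Qed.

Lemma dnorm_tri u v w : dual u -> dual v -> dual w ->
  dnorm (fun f => u f - w f) <= dnorm (fun f => u f - v f) + dnorm (fun f => v f - w f).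
Proof.
move=> hu hv hw.
have -> : (fun f => u f - w f) = (fun f => 1 * (u f - v f) + (v f - w f)).
  by apply: funext => f; ring.
apply: le_trans (dnorm_lin _ _ _) _.
- have -> : (fun f => u f - v f) = (fun f => 1 * u f + (fun g => -1 * v g) f) by apply: funext => f; ring.
  apply: dual_lin => //; have -> : (fun g => -1 * v g) = (fun g => -1 * v g + (fun _ => 0) g) by apply: funext => f; ring.
  apply: dual_lin => //; exact: dual_zero.
- have -> : (fun f => v f - w f) = (fun f => 1 * v f + (fun g => -1 * w g) f) by apply: funext => f; ring.
  apply: dual_lin => //; have -> : (fun g => -1 * w g) = (fun g => -1 * w g + (fun _ => 0) g) by apply: funext => f; ring.
  apply: dual_lin => //; exact: dual_zero.
by rewrite normr1 mul1r.
Qed.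

Lemma dual_sub u v : dual u -> dual v -> dual (fun f => u f - v f).
Proof.
move=> hu hv.
have -> : (fun f => u f - v f) = (fun f => -1 * v f + u f) by apply: funext => f; ring.
exact: dual_lin.
Qed.

Lemma free_dual u : free u -> dual u. Proof. by case. Qed.

Lemma free_lin (b : R) u v : free u -> free v -> free (fun f => b * u f + v f).
Proof.
move=> [hu Hu] [hv Hv]; split; first exact: dual_lin.
move=> e he.
have he' : 0 < e / (`|b| + 2) by rewrite divr_gt0 // ltr_wpDl.
have [pu [spu Hpu]] := Hu _ he'; have [pv [spv Hpv]] := Hv _ he'.
exists (fun f => b * pu f + pv f); split; first exact: span_lin.
have dpu := dual_span spu; have dpv := dual_span spv.
have -> : (fun f => b * u f + v f - (b * pu f + pv f)) =
   (fun f => b * (u f - pu f) + (v f - pv f)) by apply: funext => f; ring.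
apply: le_lt_trans (dnorm_lin _ (dual_sub hu dpu) (dual_sub hv dpv)) _.
have : `|b| * dnorm (fun f => u f - pu f) + dnorm (fun f => v f - pv f) <=
       `|b| * (e / (`|b| + 2)) + e / (`|b| + 2).
  by apply: lerD; [apply: ler_wpM2l; [|apply: ltW]|apply: ltW].
move=> h; apply: le_lt_trans h _.
rewrite -[X in _ + X]mul1r -mulrDl mulrA ltr_pdivrMr ?ltr_wpDl //.
rewrite mulrC ltr_pM2l //; lra.
Qed.

Lemma free_zero : free (fun _ => 0).
Proof.
split; first exact: dual_zero.
move=> e he; exists (fun _ => 0); split; first exact: span_zero.
apply: (@le_lt_trans _ _ 0) => //; apply: dnorm_le => // f _ _.
by rewrite subrr normr0.
Qed.

Lemma free_span psi : span_delta d x0 psi -> free psi.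
Proof.
move=> sp; split; first exact: dual_span.
move=> e he; exists psi; split => //.
apply: (@le_lt_trans _ _ 0) => //; apply: dnorm_le => // f _ _.
by rewrite subrr normr0.
Qed.

Lemma free_delta x : free (delta x).
Proof. exact/free_span/span_delta1. Qed.

Lemma free_of_approx mu : dual mu ->
  (forall e : R, 0 < e -> exists nu, free nu /\ dnorm (fun f => mu f - nu f) < e) -> free mu.
Proof.
move=> hm H; split => // e he.
have he2 : 0 < e / 2 by rewrite divr_gt0.
have [nu [[hnu Hnu] Hmn]] := H _ he2.
have [psi [sp Hp]] := Hnu _ he2.
exists psi; split => //.
apply: le_lt_trans (dnorm_tri hm hnu (dual_span sp)) _.
by rewrite [e](splitr e); apply: ltrD.
Qed.

Lemma free_sub u v : free u -> free v -> free (fun f => u f - v f).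
Proof.
move=> hu hv.
have -> : (fun f => u f - v f) = (fun f => -1 * v f + u f) by apply: funext => f; ring.
exact: free_lin.
Qed.

Lemma approx_bound u v f : dual u -> dual v -> lip0 f ->
  `|u f - v f| <= dnorm (fun g => u g - v g) * lipnorm f.
Proof. by move=> hu hv hf; apply: (dnorm_bound dge0 (dual_sub hu hv) hf). Qed.

End FreeA.

End L3.
Import L3.

Module L4.
Set Implicit Arguments. Unset Strict Implicit. Unset Printing Implicit Defensive.

Section Act.
Context {R : realType} {G : topologicalType} (mul : G -> G -> G) (inv : G -> G) (e : G)
  {T : Type} (d : T -> T -> R) (x0 : T) (act : G -> T -> T)
  (D : set (G -> R)) (M : (G -> R) -> R).
Hypothesis dge0 : forall x y, 0 <= d x y.
Hypothesis act_e : forall x, act e x = x.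
Hypothesis inv_l : forall g, mul (inv g) g = e.
Hypothesis d_refl : forall x, d x x = 0.
Hypothesis act_mul : forall g h x, act (mul g h) x = act g (act h x).
Hypothesis act_iso : forall g x y, d (act g x) (act g y) = d x y.
Hypothesis D_lin : forall (a : R) phi psi, D phi -> D psi -> D (fun g => a * phi g + psi g).
Hypothesis D_const : forall c : R, D (fun _ => c).
Hypothesis D_act : forall f y, lip0 d x0 f -> D (fun g => f (act g y)).
Hypothesis D_unif : forall phi, (forall eps : R, 0 < eps -> exists psi, D psi /\
   forall g, `|phi g - psi g| <= eps) -> D phi.
Hypothesis HM : bimean mul D M.
Variable Q : ((T -> R) -> R) -> ((T -> R) -> R).
Hypothesis Q_dual : forall phi, dual_elt d x0 phi -> dual_elt d x0 (Q phi).
Hypothesis Q_lin : lin_on (dual_elt d x0) Q.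
Hypothesis Q_bnd : exists C : R, forall phi, dual_elt d x0 phi -> dnorm d x0 (Q phi) <= C * dnorm d x0 phi.
Hypothesis Q_idem : forall phi, dual_elt d x0 phi -> Q (Q phi) = Q phi.
Hypothesis Q_free : forall phi, dual_elt d x0 phi -> free_elt d x0 (Q phi).
Hypothesis Q_onto : forall mu, free_elt d x0 mu -> exists phi, dual_elt d x0 phi /\ Q phi = mu.
Hypothesis Q_ker : forall g phi, dual_elt d x0 phi -> Q phi = (fun _ => 0) ->
      Q (Tdd d x0 act g phi) = (fun _ => 0).

Notation lip0 := (lip0 d x0).
Notation lipnorm := (lipnorm d).
Notation dual := (dual_elt d x0).
Notation dnorm := (dnorm d x0).
Notation free := (free_elt d x0).
Notation delta := (delta d x0).
Notation Ts := (@Tstar R G T x0 act).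
Notation Tdd := (@Tdd R G T d x0 act).
Let dual_lin := @dual_lin R T d x0 dge0.
Let lip0_lin := @lip0_lin R T d x0 dge0.
Let lipnorm0 := @lipnorm0 R T d dge0.
Let lip0_zero := @lip0_zero R T d x0 dge0.
Let dnorm_ge0 := @dnorm_ge0 R T d x0 dge0.
Let dnorm_le := @dnorm_le R T d x0 dge0.
Let dnorm_bound := @dnorm_bound R T d x0 dge0.
Let lip_bound := @lip_bound R T d x0 dge0.
Let lipnorm_ge0 := @lipnorm_ge0 R T d dge0.
Let lipnorm_le := @lipnorm_le R T d dge0.
Let dual_delta := @dual_delta R T d x0 dge0.
Let dual_big := @dual_big R T d x0 dge0.
Let dual_span := @dual_span R T d x0 dge0.
Let dnorm_lin := @dnorm_lin R T d x0 dge0.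
Let dnorm_tri := @dnorm_tri R T d x0 dge0.
Let dual_sub := @dual_sub R T d x0 dge0.
Let free_lin := @free_lin R T d x0 dge0.
Let free_zero := @free_zero R T d x0 dge0.
Let free_span := @free_span R T d x0 dge0.
Let free_delta := @free_delta R T d x0 dge0.
Let free_of_approx := @free_of_approx R T d x0 dge0.
Let free_sub := @free_sub R T d x0 dge0.
Let approx_bound := @approx_bound R T d x0 dge0.

Lemma M_lin (a : R) phi psi : D phi -> D psi -> M (fun g => a * phi g + psi g) = a * M phi + M psi.
Proof. by case: HM => h _; apply: h. Qed.

Lemma M_const c : M (fun _ => c) = c.
Proof.
case: HM => _ [_ [h1 _]].
have := M_lin c (D_const 1) (D_const 0).
have -> : (fun _ : G => c * 1 + 0) = (fun _ => c) by apply: funext => g; rewrite mulr1 addr0.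
move=> ->; rewrite h1 mulr1.
have := M_lin 1 (D_const 0) (D_const 0).
have -> : (fun _ : G => 1 * (0:R) + 0) = (fun _ => 0) by apply: funext => g; rewrite mulr0 addr0.
move=> h; lra.
Qed.

Lemma M_add phi psi : D phi -> D psi -> M (fun g => phi g + psi g) = M phi + M psi.
Proof.
move=> hp hq; have := M_lin 1 hp hq.
have -> : (fun g => 1 * phi g + psi g) = (fun g => phi g + psi g) by apply: funext => g; rewrite mul1r.
by rewrite mul1r.
Qed.

Lemma M_scale (a : R) phi : D phi -> M (fun g => a * phi g) = a * M phi.
Proof.
move=> hp; have := M_lin a hp (D_const 0).
have -> : (fun g => a * phi g + 0) = (fun g => a * phi g) by apply: funext => g; rewrite addr0.
by rewrite M_const addr0.
Qed.

Lemma D_add phi psi : D phi -> D psi -> D (fun g => phi g + psi g).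
Proof.
move=> hp hq; have := D_lin 1 hp hq.
by have -> : (fun g => 1 * phi g + psi g) = (fun g => phi g + psi g) by apply: funext => g; rewrite mul1r.
Qed.

Lemma D_scale (a : R) phi : D phi -> D (fun g => a * phi g).
Proof.
move=> hp; have := D_lin a hp (D_const 0).
by have -> : (fun g => a * phi g + 0) = (fun g => a * phi g) by apply: funext => g; rewrite addr0.
Qed.

Lemma D_sub phi psi : D phi -> D psi -> D (fun g => phi g - psi g).
Proof.
move=> hp hq; have := D_lin (-1) hq hp.
by have -> : (fun g => -1 * psi g + phi g) = (fun g => phi g - psi g) by apply: funext => g; ring.
Qed.

Lemma M_sub phi psi : D phi -> D psi -> M (fun g => phi g - psi g) = M phi - M psi.
Proof.
move=> hp hq; have := M_lin (-1) hq hp.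
have -> : (fun g => -1 * psi g + phi g) = (fun g => phi g - psi g) by apply: funext => g; ring.
move=> ->; ring.
Qed.

Lemma M_ge0 phi : D phi -> (forall g, 0 <= phi g) -> 0 <= M phi.
Proof. by case: HM => _ [h _]; apply: h. Qed.

Lemma M_bound phi c : D phi -> (forall g, `|phi g| <= c) -> `|M phi| <= c.
Proof.
move=> hp hc; rewrite ler_norml; apply/andP; split.
  have := M_ge0 (D_add hp (D_const c)) _.
  rewrite M_add // M_const => h.
  have : 0 <= M phi + c by apply: h => g; have := hc g; rewrite ler_norml => /andP[h1 _]; lra.
  lra.
have := M_ge0 (D_sub (D_const c) hp) _.
rewrite M_sub // M_const => h.
have : 0 <= c - M phi by apply: h => g; have := hc g; rewrite ler_norml => /andP[_ h1]; lra.
lra.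
Qed.

Lemma D_big n (F : 'I_n -> G -> R) : (forall i, D (F i)) -> D (fun g => \sum_(i < n) F i g).
Proof.
elim: n F => [|n IH] F HF.
  have -> : (fun g => \sum_(i < 0) F i g) = (fun _ => 0) by apply: funext => g; rewrite big_ord0.
  exact: D_const.
have -> : (fun g => \sum_(i < n.+1) F i g) =
   (fun g => (\sum_(i < n) F (widen_ord (leqnSn n) i) g) + F ord_max g).
  by apply: funext => g; rewrite big_ord_recr.
by apply: D_add => //; apply: IH.
Qed.

Lemma M_big n (F : 'I_n -> G -> R) : (forall i, D (F i)) ->
  M (fun g => \sum_(i < n) F i g) = \sum_(i < n) M (F i).
Proof.
elim: n F => [|n IH] F HF.
  have -> : (fun g => \sum_(i < 0) F i g) = (fun _ => 0) by apply: funext => g; rewrite big_ord0.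
  by rewrite M_const big_ord0.
have -> : (fun g => \sum_(i < n.+1) F i g) =
   (fun g => (\sum_(i < n) F (widen_ord (leqnSn n) i) g) + F ord_max g).
  by apply: funext => g; rewrite big_ord_recr.
rewrite M_add //; last by apply: D_big.
by rewrite IH // big_ord_recr.
Qed.

Lemma M_left phi h : D phi -> M (fun g => phi (mul h g)) = M phi.
Proof. by case: HM => _ [_ [_ [hl _]]]; apply: hl. Qed.

Lemma M_right phi h : D phi -> M (fun g => phi (mul g h)) = M phi.
Proof. by case: HM => _ [_ [_ [_ hr]]]; apply: hr. Qed.

Lemma TsE g f m : Ts g f m = f (act g m) - f (act g x0).
Proof. by []. Qed.

Lemma Ts_lip g f : lip0 f -> lip0 (Ts g f) /\ lipnorm (Ts g f) <= lipnorm f.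
Proof.
move=> hf; have hb : forall x y, `|Ts g f x - Ts g f y| <= lipnorm f * d x y.
  move=> x y; rewrite !TsE.
  have -> : f (act g x) - f (act g x0) - (f (act g y) - f (act g x0)) = f (act g x) - f (act g y) by ring.
  by rewrite -(act_iso g x y); apply: lip_bound.
split; last by apply: lipnorm_le => //; apply: lipnorm_ge0.
by split; [rewrite TsE subrr | exists (lipnorm f)].
Qed.

Lemma Ts_lip0 g f : lip0 f -> lip0 (Ts g f).
Proof. by move=> hf; case: (Ts_lip g hf). Qed.

Lemma Ts_comp g h f : Ts g (Ts h f) = Ts (mul h g) f.
Proof. by apply: funext => m; rewrite !TsE !act_mul; ring. Qed.

Lemma Ts_lin g (a : R) f f' : Ts g (fun x => a * f x + f' x) = (fun x => a * Ts g f x + Ts g f' x).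
Proof. by apply: funext => m; rewrite !TsE; ring. Qed.

Lemma TddE g phi f : lip0 f -> Tdd g phi f = phi (Ts g f).
Proof. by move=> hf; rewrite /Defs.Tdd asboolT. Qed.

Lemma TddN g phi f : ~ lip0 f -> Tdd g phi f = 0.
Proof. by move=> hf; rewrite /Defs.Tdd asboolF. Qed.

Lemma dual_Tdd g phi : dual phi -> dual (Tdd g phi).
Proof.
move=> hp; split; first exact: TddN.
split.
  move=> a f f' hf hf'; rewrite !TddE //; last exact: lip0_lin.
  rewrite Ts_lin; case: hp => _ [hl _]; apply: hl; exact: Ts_lip0.
exists (dnorm phi) => f hf; rewrite TddE //.
apply: le_trans (dnorm_bound hp (Ts_lip0 g hf)) _.
by apply: ler_wpM2l => //; case: (Ts_lip g hf).
Qed.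

Lemma dnorm_Tdd g phi : dual phi -> dnorm (Tdd g phi) <= dnorm phi.
Proof.
move=> hp; apply: dnorm_le => // f hf h1; rewrite TddE //.
apply: le_trans (dnorm_bound hp (Ts_lip0 g hf)) _.
rewrite -[X in _ <= X]mulr1; apply: ler_wpM2l => //.
by apply: le_trans h1; case: (Ts_lip g hf).
Qed.

Notation RG := (@RG R G T d x0 act M).

Lemma free_big n (F : 'I_n -> (T -> R) -> R) : (forall i, free (F i)) ->
  free (fun f => \sum_(i < n) F i f).
Proof.
elim: n F => [|n IH] F HF.
  have -> : (fun f => \sum_(i < 0) F i f) = (fun _ => 0) by apply: funext => f; rewrite big_ord0.
  exact: free_zero.
have -> : (fun f => \sum_(i < n.+1) F i f) =
   (fun f => 1 * (\sum_(i < n) F (widen_ord (leqnSn n) i) f) + F ord_max f).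
  by apply: funext => f; rewrite big_ord_recr mul1r.
apply: free_lin => //; exact: IH.
Qed.

Lemma span_Ts n (a : 'I_n -> R) (m : 'I_n -> T) g f : lip0 f ->
  \sum_(i < n) a i * delta (m i) (Ts g f) = \sum_(i < n) a i * (f (act g (m i)) - f (act g x0)).
Proof. by move=> hf; rewrite span_eval //; exact: Ts_lip0. Qed.

Lemma KM mu f : free mu -> lip0 f -> D (fun g => mu (Ts g f)).
Proof.
move=> [hm Hm] hf; apply: D_unif => eps he.
have L0 := lipnorm_ge0 f.
have he' : 0 < eps / (lipnorm f + 1) by rewrite divr_gt0 // ltr_wpDl.
have [psi [[n [a [m Hpsi]]] Hd]] := Hm _ he'.
exists (fun g => \sum_(i < n) a i * (f (act g (m i)) - f (act g x0))); split.
  apply: D_big => i; apply: D_scale; apply: D_sub; exact: D_act.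
move=> g; rewrite -span_Ts // -[\sum_(i < n) _](congr1 (fun F => F (Ts g f)) Hpsi).
have hp : dual psi by rewrite Hpsi; apply: dual_span => //; exists n, a, m.
apply: le_trans (approx_bound hm hp (Ts_lip0 g hf)) _.
apply: le_trans (_ : eps / (lipnorm f + 1) * lipnorm f <= _).
  apply: ler_pM; [exact: dnorm_ge0|exact: lipnorm_ge0|exact: ltW|by case: (Ts_lip g hf)].
rewrite mulrAC ler_pdivrMr ?ltr_wpDl // ler_pM2l //; lra.
Qed.

Lemma free_Tdd g mu : free mu -> free (Tdd g mu).
Proof.
move=> [hm Hm]; apply: free_of_approx => //; first exact: dual_Tdd.
move=> eps he; have [psi [[n [a [m Hpsi]]] Hd]] := Hm _ he.
have hp : dual psi by rewrite Hpsi; apply: dual_span => //; exists n, a, m.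
exists (fun f => \sum_(i < n) a i * (delta (act g (m i)) f - delta (act g x0) f)); split.
  apply: free_big => i.
  have -> : (fun f => a i * (delta (act g (m i)) f - delta (act g x0) f)) =
     (fun f => a i * (fun h => delta (act g (m i)) h - delta (act g x0) h) f + (fun _ => 0) f).
    by apply: funext => f; rewrite addr0.
  apply: free_lin; first by apply: free_sub; apply: free_delta.
  try exact: free_zero.
apply: le_lt_trans Hd; apply: dnorm_le => // f hf h1.
rewrite TddE //=.
have -> : \sum_(i < n) a i * (delta (act g (m i)) f - delta (act g x0) f) =
          \sum_(i < n) a i * (f (act g (m i)) - f (act g x0)).
  by apply: eq_bigr => i _; rewrite !deltaE.
rewrite -span_Ts // -[\sum_(i < n) _](congr1 (fun F => F (Ts g f)) Hpsi).
apply: le_trans (approx_bound hm hp (Ts_lip0 g hf)) _.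
rewrite -[X in _ <= X]mulr1; apply: ler_wpM2l; first exact: dnorm_ge0.
by apply: le_trans h1; case: (Ts_lip g hf).
Qed.

Lemma RGE mu f : lip0 f -> RG mu f = M (fun g => mu (Ts g f)).
Proof.
move=> hf; rewrite /Defs.RG asboolT //; congr M; apply: funext => g; exact: TddE.
Qed.

Lemma RGN mu f : ~ lip0 f -> RG mu f = 0.
Proof. by move=> hf; rewrite /Defs.RG asboolF. Qed.

Lemma dual_RG mu : free mu -> dual (RG mu).
Proof.
move=> hm; split; first exact: RGN.
split.
  move=> a f f' hf hf'; rewrite !RGE //; last exact: lip0_lin.
  rewrite -M_lin; try exact: KM.
  congr M; apply: funext => g; rewrite Ts_lin.
  by case: (free_dual hm) => _ [hl _]; apply: hl; apply: Ts_lip0.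
exists (dnorm mu) => f hf; rewrite RGE //; apply: M_bound; first exact: KM.
move=> g; apply: le_trans (dnorm_bound (free_dual hm) (Ts_lip0 g hf)) _.
by apply: ler_wpM2l; [exact: dnorm_ge0 | case: (Ts_lip g hf)].
Qed.

Lemma RG_lin (a : R) u v : free u -> free v ->
  RG (fun f => a * u f + v f) = (fun f => a * RG u f + RG v f).
Proof.
move=> hu hv; apply: funext => f.
have [hf|nf] := pselect (lip0 f); last by rewrite !RGN // mulr0 addr0.
by rewrite !RGE // -M_lin //; exact: KM.
Qed.

Lemma RG_inv h mu : free mu -> Tdd h (RG mu) = RG mu.
Proof.
move=> hm; apply: dual_ext; [exact: dual_Tdd (dual_RG hm) | exact: dual_RG |].
move=> f hf; rewrite TddE // !RGE //; last exact: Ts_lip0.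
under eq_fun do rewrite Ts_comp.
by rewrite (M_left (phi := fun g => mu (Ts g f)) h) //; exact: KM.
Qed.

Lemma RG_fix rho : free rho -> (forall g, Tdd g rho = rho) -> RG rho = rho.
Proof.
move=> hr hinv; apply: dual_ext; [exact: dual_RG | exact: free_dual |].
move=> f hf; rewrite RGE //.
have -> : (fun g => rho (Ts g f)) = (fun _ => rho f).
  by apply: funext => g; rewrite -(TddE g rho hf) hinv.
exact: M_const.
Qed.


Definition Avg (f : T -> R) : T -> R := fun x => M (fun g => Ts g f x).

Lemma D_Ts_pt f x : lip0 f -> D (fun g => Ts g f x).
Proof. by move=> hf; apply: D_sub; apply: D_act. Qed.

Lemma Avg_lip f : lip0 f -> lip0 (Avg f) /\ lipnorm (Avg f) <= lipnorm f.
Proof.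
move=> hf.
have hb : forall x y, `|Avg f x - Avg f y| <= lipnorm f * d x y.
  move=> x y; rewrite /Avg -M_sub; try exact: D_Ts_pt.
  apply: M_bound; first by apply: D_sub; apply: D_Ts_pt.
  move=> g; apply: le_trans (lip_bound (Ts_lip0 g hf) x y) _.
  by apply: ler_wpM2r => //; case: (Ts_lip g hf).
split; last by apply: lipnorm_le => //; apply: lipnorm_ge0.
split; last by exists (lipnorm f).
rewrite /Avg; under eq_fun do rewrite TsE subrr; exact: M_const.
Qed.

Lemma Avg_lip0 f : lip0 f -> lip0 (Avg f).
Proof. by move=> hf; case: (Avg_lip hf). Qed.

Lemma Avg_inv f h x : lip0 f -> Avg f (act h x) = Avg f x.
Proof.
move=> hf; rewrite /Avg.
have -> : (fun g => Ts g f (act h x)) =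
  (fun g => (fun g' => Ts g' f x) (mul g h) + ((fun g' => f (act g' (act h x0))) g - (fun g' => f (act g' x0)) g)).
  by apply: funext => g; rewrite /= !TsE !act_mul; ring.
rewrite M_add; first last.
- by apply: D_sub; apply: D_act.
- have -> : (fun g => (fun g' => Ts g' f x) (mul g h)) = (fun g => f (act g (act h x)) - f (act g (act h x0))).
    by apply: funext => g; rewrite /= TsE !act_mul.
  by apply: D_sub; apply: D_act.
rewrite M_sub; try by apply: D_act.
have -> : (fun g => f (act g (act h x0))) = (fun g => (fun g' => f (act g' x0)) (mul g h)).
  by apply: funext => g; rewrite /= act_mul.
rewrite (M_right (phi := fun g' => f (act g' x0)) h); last exact: D_act.
rewrite (M_right (phi := fun g' => Ts g' f x) h); last exact: D_Ts_pt.
by rewrite subrr addr0.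
Qed.

Lemma Avg_lin (a : R) f f' : lip0 f -> lip0 f' ->
  Avg (fun x => a * f x + f' x) = (fun x => a * Avg f x + Avg f' x).
Proof.
move=> hf hf'; apply: funext => x; rewrite /Avg -M_lin; try exact: D_Ts_pt.
by congr M; apply: funext => g; rewrite Ts_lin.
Qed.

Lemma Avg_fix F : lip0 F -> (forall g x, F (act g x) = F x) -> Avg F = F.
Proof.
move=> hF hinv; apply: funext => x; rewrite /Avg.
under eq_fun do rewrite TsE !hinv (proj1 hF) subr0.
exact: M_const.
Qed.

Lemma Avg_Ts h f : lip0 f -> Avg (Ts h f) = Avg f.
Proof.
move=> hf; apply: funext => x; rewrite /Avg.
under eq_fun do rewrite Ts_comp.
by rewrite (M_left (phi := fun g => Ts g f x) h) //; exact: D_Ts_pt.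
Qed.

Lemma interchange mu f : free mu -> lip0 f -> M (fun g => mu (Ts g f)) = mu (Avg f).
Proof.
move=> hm hf.
have span_case : forall psi, span_delta d x0 psi -> M (fun g => psi (Ts g f)) = psi (Avg f).
  move=> psi [n [a [m ->]]].
  rewrite span_eval; last exact: Avg_lip0.
  have -> : (fun g => \sum_(i < n) a i * delta (m i) (Ts g f)) = (fun g => \sum_(i < n) a i * Ts g f (m i)).
    by apply: funext => g; apply: span_eval; apply: Ts_lip0.
  rewrite M_big; last by move=> i; apply: D_scale; apply: D_Ts_pt.
  by apply: eq_bigr => i _; rewrite M_scale //; apply: D_Ts_pt.
apply/eqP; rewrite -subr_eq0; apply/eqP; apply: le_eps_eq0 => eps he.
have L0 := lipnorm_ge0 f.
set eta := eps / (2 * (lipnorm f + 1)).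
have heta : 0 < eta by rewrite divr_gt0 // mulr_gt0 // ltr_wpDl.
have [psi [sp Hd]] := proj2 hm _ heta.
have hp : dual psi by apply: dual_span.
have fp : free psi by apply: free_span.
have dm := free_dual hm.
have -> : M (fun g => mu (Ts g f)) - mu (Avg f) =
   M (fun g => mu (Ts g f) - psi (Ts g f)) + (psi (Avg f) - mu (Avg f)).
  have e1 : M (fun g => mu (Ts g f) - psi (Ts g f)) = M (fun g => mu (Ts g f)) - M (fun g => psi (Ts g f)) by apply: M_sub; apply: KM.
  rewrite e1 (span_case psi sp); ring.
apply: le_trans (ler_normD _ _) _.
have h1 : `|M (fun g => mu (Ts g f) - psi (Ts g f))| <= eta * lipnorm f.
  apply: M_bound; first by apply: D_sub; apply: KM.
  move=> g; apply: le_trans (approx_bound dm hp (Ts_lip0 g hf)) _.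
  apply: ler_pM; [exact: dnorm_ge0|exact: lipnorm_ge0|exact: ltW|by case: (Ts_lip g hf)].
have h2 : `|psi (Avg f) - mu (Avg f)| <= eta * lipnorm f.
  rewrite distrC; apply: le_trans (approx_bound dm hp (Avg_lip0 hf)) _.
  apply: ler_pM; [exact: dnorm_ge0|exact: lipnorm_ge0|exact: ltW|by case: (Avg_lip hf)].
apply: le_trans (lerD h1 h2) _.
have : eta * lipnorm f <= eps / 2.
  rewrite /eta invfM mulrA -mulrA [_^-1 * _]mulrC mulrA.
  rewrite ler_pdivrMr ?ltr_wpDl // ler_wpM2l ?divr_ge0 ?(ltW he) //; lra.
lra.
Qed.

Notation Qp := (quot_pts d act).
Notation dq := (dq d act).
Notation cls := (cls d act).
Notation q0 := (cls x0).
Notation lip0q := (Defs.lip0 dq q0).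
Notation lipnormq := (Defs.lipnorm dq).
Notation oclass := (oclass d act).
Notation lip0G := (lip0G d x0 act).
Notation Psi := (Psi d act).

Definition pickq (A : Qp) : T := projT1 (cid (proj2_sig A)).

Lemma pickqP (A : Qp) : proj1_sig A = oclass (pickq A).
Proof. by rewrite /pickq; case: (cid _). Qed.

Lemma pickq_cls (A : Qp) : A = cls (pickq A).
Proof.
rewrite /Defs.cls; case: A => S HS /=.
by apply: eq_exist; have := pickqP (exist _ S HS).
Qed.

Lemma oclass_self x : oclass x x.
Proof. by move=> eps he; exists e; rewrite act_e d_refl. Qed.

Lemma cls_act g x : cls (act g x) = cls x.
Proof.
rewrite /Defs.cls; apply: eq_exist; apply/seteqP; split => y Hy eps he.
  have [h Hh] := Hy eps he; exists (mul h g); by rewrite act_mul.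
have [h Hh] := Hy eps he; exists (mul h (inv g)).
by rewrite act_mul -(act_mul (inv g)) inv_l act_e.
Qed.

Lemma dq_lb (A B : Qp) x y : proj1_sig A x -> proj1_sig B y -> dq A B <= d x y.
Proof.
move=> hx hy; rewrite /Defs.dq; apply: ge_inf.
  by exists 0 => r [x' [y' [_ [_ ->]]]].
by exists x, y.
Qed.

Lemma dq_glb (A B : Qp) c : (forall x y, proj1_sig A x -> proj1_sig B y -> c <= d x y) -> c <= dq A B.
Proof.
move=> H; rewrite /Defs.dq; apply: lb_le_inf.
  exists (d (pickq A) (pickq B)), (pickq A), (pickq B).
  by rewrite !pickqP; split; [|split]; try exact: oclass_self.
by move=> r [x' [y' [hx [hy ->]]]]; apply: H.
Qed.

Lemma dq_ge0 A B : 0 <= dq A B.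
Proof. by apply: dq_glb => x y _ _; apply: dge0. Qed.

Lemma dq_cls x y : dq (cls x) (cls y) <= d x y.
Proof. by apply: dq_lb; apply: oclass_self. Qed.

Lemma lip0G_oclass F x y : lip0G F -> oclass x y -> F y = F x.
Proof.
move=> [hF hinv] hxy; apply/eqP; rewrite -subr_eq0; apply/eqP; apply: le_eps_eq0 => eps he.
have L0 := lipnorm_ge0 F.
have he' : 0 < eps / (lipnorm F + 1) by rewrite divr_gt0 // ltr_wpDl.
have [g Hg] := hxy _ he'.
rewrite -(hinv g x); apply: le_trans (lip_bound hF y (act g x)) _.
apply: le_trans (_ : lipnorm F * (eps / (lipnorm F + 1)) <= _).
  by apply: ler_wpM2l => //; apply: ltW.
rewrite mulrA ler_pdivrMr ?ltr_wpDl // mulrC ler_wpM2l ?(ltW he) //; lra.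
Qed.

Definition sharp (F : T -> R) (A : Qp) : R := F (pickq A).

Lemma sharp_pt F (A : Qp) x : lip0G F -> proj1_sig A x -> sharp F A = F x.
Proof.
move=> hF hx; rewrite /sharp; symmetry; apply: lip0G_oclass => //.
by rewrite -pickqP.
Qed.

Lemma sharp_lip F : lip0G F -> lip0q (sharp F) /\ lipnormq (sharp F) <= lipnorm F.
Proof.
move=> hF; have L0 := lipnorm_ge0 F.
have hb : forall A B, `|sharp F A - sharp F B| <= lipnorm F * dq A B.
  move=> A B.
  have [Lz|Lnz] := eqVneq (lipnorm F) 0.
    rewrite Lz mul0r; have := lip_bound (proj1 hF) (pickq A) (pickq B).
    by rewrite Lz mul0r /sharp.
  have Lp : 0 < lipnorm F by rewrite lt0r Lnz.
  rewrite mulrC -ler_pdivrMr //; apply: dq_glb => x y hx hy.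
  rewrite (sharp_pt hF hx) (sharp_pt hF hy) ler_pdivrMr // mulrC.
  exact: lip_bound (proj1 hF) x y.
split; last by apply: (@L1.lipnorm_le R Qp dq dq_ge0) => //.
split; last by exists (lipnorm F).
by rewrite (@sharp_pt F (cls x0) x0 hF (oclass_self x0)); case: hF => [[]].
Qed.

Lemma sharp_lip0 F : lip0G F -> lip0q (sharp F).
Proof. by move=> hF; case: (sharp_lip hF). Qed.

Lemma Psi_lip f : lip0q f -> lip0G (Psi f) /\ lipnorm (Psi f) <= lipnormq f.
Proof.
move=> hf; have L0 := @L1.lipnorm_ge0 R Qp dq dq_ge0 f.
have hb : forall x y, `|Psi f x - Psi f y| <= lipnormq f * d x y.
  move=> x y; rewrite /Defs.Psi; apply: le_trans (L1.lip_bound dq_ge0 hf _ _) _.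
  by apply: ler_wpM2l => //; apply: dq_cls.
split; last by apply: lipnorm_le.
split; last by move=> g x; rewrite /Defs.Psi cls_act.
split; last by exists (lipnormq f).
by rewrite /Defs.Psi; case: hf.
Qed.

Lemma Psi_lip0G f : lip0q f -> lip0G (Psi f).
Proof. by move=> hf; case: (Psi_lip hf). Qed.

Lemma Psi_sharp F : lip0G F -> Psi (sharp F) = F.
Proof. by move=> hF; apply: funext => x; rewrite /Defs.Psi (@sharp_pt F (cls x) x hF (oclass_self x)). Qed.

Lemma sharp_Psi f : sharp (Psi f) = f.
Proof. by apply: funext => A; rewrite /sharp /Defs.Psi -pickq_cls. Qed.

Lemma Avg_lip0G f : lip0 f -> lip0G (Avg f).
Proof. by move=> hf; split; [exact: Avg_lip0 | move=> g x; exact: Avg_inv]. Qed.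

Let dual_lin_q := @L2.dual_lin R Qp dq q0 dq_ge0.
Let dnorm_le_q := @L2.dnorm_le R Qp dq q0 dq_ge0.
Let dnorm_bound_q := @L2.dnorm_bound R Qp dq q0 dq_ge0.
Let dnorm_ge0_q := @L2.dnorm_ge0 R Qp dq q0 dq_ge0.
Let lipnorm_ge0_q := @L1.lipnorm_ge0 R Qp dq dq_ge0.
Let lip0_lin_q := @L2.lip0_lin R Qp dq q0 dq_ge0.
Let free_of_approx_q := @L3.free_of_approx R Qp dq q0 dq_ge0.
Let free_span_q := @L3.free_span R Qp dq q0 dq_ge0.
Let dual_span_q := @L3.dual_span R Qp dq q0 dq_ge0.
Let approx_bound_q := @L3.approx_bound R Qp dq q0 dq_ge0.
Let free_sub_q := @L3.free_sub R Qp dq q0 dq_ge0.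
Let dual_sub_q := @L3.dual_sub R Qp dq q0 dq_ge0.
Notation dualq := (dual_elt dq q0).
Notation freeq := (free_elt dq q0).
Notation dnormq := (Defs.dnorm dq q0).
Notation deltaq := (Defs.delta dq q0).

Definition Sop (mu : (T -> R) -> R) : (Qp -> R) -> R :=
  fun f => if `[< lip0q f >] then mu (Psi f) else 0.

Lemma SopE mu f : lip0q f -> Sop mu f = mu (Psi f).
Proof. by move=> hf; rewrite /Sop asboolT. Qed.

Lemma SopN mu f : ~ lip0q f -> Sop mu f = 0.
Proof. by move=> hf; rewrite /Sop asboolF. Qed.

Lemma Psi_lin (a : R) f f' : Psi (fun A => a * f A + f' A) = (fun x => a * Psi f x + Psi f' x).
Proof. by []. Qed.

Lemma dual_S mu : dual mu -> dualq (Sop mu).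
Proof.
move=> hm; split; first exact: SopN.
split.
  move=> a f f' hf hf'; rewrite !SopE //; last exact: lip0_lin_q.
  rewrite Psi_lin; case: hm => _ [hl _]; apply: hl; exact: (proj1 (Psi_lip0G _)).
exists (dnorm mu) => f hf; rewrite SopE //.
apply: le_trans (dnorm_bound hm (proj1 (Psi_lip0G hf))) _.
by apply: ler_wpM2l => //; case: (Psi_lip hf).
Qed.

Lemma dnorm_S mu : dual mu -> dnormq (Sop mu) <= dnorm mu.
Proof.
move=> hm; apply: dnorm_le_q => // f hf h1; rewrite SopE //.
apply: le_trans (dnorm_bound hm (proj1 (Psi_lip0G hf))) _.
rewrite -[X in _ <= X]mulr1; apply: ler_wpM2l => //.
by apply: le_trans h1; case: (Psi_lip hf).
Qed.

Lemma S_lin (a : R) u v : Sop (fun f => a * u f + v f) = (fun f => a * Sop u f + Sop v f).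
Proof.
apply: funext => f; have [hf|nf] := pselect (lip0q f); first by rewrite !SopE.
by rewrite !SopN // mulr0 addr0.
Qed.

Lemma S_delta x : Sop (delta x) = deltaq (cls x).
Proof.
apply: funext => f; have [hf|nf] := pselect (lip0q f); last by rewrite SopN // deltaN.
by rewrite SopE // deltaE ?(deltaE _ hf) //; exact: (proj1 (Psi_lip0G hf)).
Qed.

Lemma S_span n (a : 'I_n -> R) (m : 'I_n -> T) :
  Sop (fun f => \sum_(i < n) a i * delta (m i) f) = (fun f => \sum_(i < n) a i * deltaq (cls (m i)) f).
Proof.
apply: funext => f; have [hf|nf] := pselect (lip0q f).
  rewrite SopE // span_eval; last exact: (proj1 (Psi_lip0G hf)).
  by rewrite span_eval.
by rewrite SopN //; symmetry; apply: big1 => i _; rewrite deltaN // mulr0.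
Qed.

Lemma free_S mu : free mu -> freeq (Sop mu).
Proof.
move=> [hm Hm]; apply: free_of_approx_q; first exact: dual_S.
move=> eps he; have [psi [[n [a [m Hpsi]]] Hd]] := Hm _ he.
have hp : dual psi by rewrite Hpsi; apply: dual_span; exists n, a, m.
exists (Sop psi); split.
  rewrite Hpsi S_span; apply: free_span_q; by exists n, (fun i => a i), (fun i => cls (m i)).
apply: le_lt_trans Hd; apply: dnorm_le_q => // f hf h1; rewrite !SopE //.
apply: le_trans (approx_bound hm hp (proj1 (Psi_lip0G hf))) _.
rewrite -[X in _ <= X]mulr1; apply: ler_wpM2l => //.
by apply: le_trans h1; case: (Psi_lip hf).
Qed.

Definition Rt (nu : (Qp -> R) -> R) : (T -> R) -> R :=
  fun f => if `[< lip0 f >] then nu (sharp (Avg f)) else 0.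

Definition Tm nu := Q (Rt nu).

Lemma RtE nu f : lip0 f -> Rt nu f = nu (sharp (Avg f)).
Proof. by move=> hf; rewrite /Rt asboolT. Qed.

Lemma RtN nu f : ~ lip0 f -> Rt nu f = 0.
Proof. by move=> hf; rewrite /Rt asboolF. Qed.

Lemma sharp_lin (a : R) F F' : sharp (fun x => a * F x + F' x) = (fun A => a * sharp F A + sharp F' A).
Proof. by []. Qed.

Lemma dual_Rt nu : dualq nu -> dual (Rt nu).
Proof.
move=> hn; split; first exact: RtN.
split.
  move=> a f f' hf hf'; rewrite !RtE //; last exact: lip0_lin.
  rewrite Avg_lin // sharp_lin; case: hn => _ [hl _]; apply: hl;
  by apply: sharp_lip0; apply: Avg_lip0G.
exists (dnormq nu) => f hf; rewrite RtE //.
apply: le_trans (dnorm_bound_q hn (sharp_lip0 (Avg_lip0G hf))) _.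
apply: ler_wpM2l => //; apply: le_trans (proj2 (sharp_lip (Avg_lip0G hf))) _.
by case: (Avg_lip hf).
Qed.

Lemma dnorm_Rt nu : dualq nu -> dnorm (Rt nu) <= dnormq nu.
Proof.
move=> hn; apply: dnorm_le => // f hf h1; rewrite RtE //.
apply: le_trans (dnorm_bound_q hn (sharp_lip0 (Avg_lip0G hf))) _.
rewrite -[X in _ <= X]mulr1; apply: ler_wpM2l => //.
apply: le_trans h1; apply: le_trans (proj2 (sharp_lip (Avg_lip0G hf))) _.
by case: (Avg_lip hf).
Qed.

Lemma Rt_lin (a : R) u v : Rt (fun f => a * u f + v f) = (fun f => a * Rt u f + Rt v f).
Proof.
apply: funext => f; have [hf|nf] := pselect (lip0 f); first by rewrite !RtE.
by rewrite !RtN // mulr0 addr0.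
Qed.

Lemma Rt_inv h nu : dualq nu -> Tdd h (Rt nu) = Rt nu.
Proof.
move=> hn; apply: dual_ext; [exact: dual_Tdd (dual_Rt hn) | exact: dual_Rt |].
by move=> f hf; rewrite TddE // !RtE ?Avg_Ts //; exact: Ts_lip0.
Qed.

Lemma Rt_S mu : free mu -> Rt (Sop mu) = RG mu.
Proof.
move=> hm; apply: dual_ext; [exact: dual_Rt (dual_S (free_dual hm)) | exact: dual_RG |].
move=> f hf; rewrite RtE // SopE; last exact: sharp_lip0 (Avg_lip0G hf).
by rewrite Psi_sharp ?RGE ?interchange //; exact: Avg_lip0G.
Qed.

Lemma Q0 : Q (fun _ => 0) = (fun _ => 0).
Proof.
have h := Q_lin 1 dual_zero dual_zero.
have e0 : (fun f : T -> R => 1 * (fun _ : T -> R => (0:R)) f + (fun _ : T -> R => (0:R)) f) = (fun _ => 0).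
  by apply: funext => f /=; rewrite mulr0 addr0.
rewrite e0 in h; apply: funext => f; have := congr1 (fun F => F f) h => /=; lra.
Qed.

Lemma Q_fix mu : free mu -> Q mu = mu.
Proof. by move=> hm; have [phi [hp <-]] := Q_onto hm; rewrite Q_idem. Qed.

Lemma Q_comm g phi : dual phi -> Q (Tdd g phi) = Tdd g (Q phi).
Proof.
move=> hp; have hq := Q_dual hp.
have hpsi : dual (fun f => -1 * Q phi f + phi f) by apply: dual_lin.
have k : Q (fun f => -1 * Q phi f + phi f) = (fun _ => 0).
  rewrite Q_lin // Q_idem //; apply: funext => f; ring.
have k2 := Q_ker g hpsi k.
have e1 : Tdd g (fun f => -1 * Q phi f + phi f) = (fun f => -1 * Tdd g (Q phi) f + Tdd g phi f).
  apply: funext => f; have [hf|nf] := pselect (lip0 f); first by rewrite !TddE.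
  by rewrite !TddN // mulr0 addr0.
rewrite e1 in k2.
rewrite Q_lin in k2; [|exact: dual_Tdd hq|exact: dual_Tdd hp].
rewrite (Q_fix (free_Tdd g (Q_free hp))) in k2.
apply: funext => f; have := congr1 (fun F => F f) k2 => /=; lra.
Qed.

Lemma Q_inv phi : dual phi -> (forall g, Tdd g phi = phi) -> forall g, Tdd g (Q phi) = Q phi.
Proof. by move=> hp hi g; rewrite -Q_comm // hi. Qed.

Definition KQ := opnorm_dual d x0 Q.

Lemma opnorm_hasub : has_ubound [set r | exists phi, dual phi /\ dnorm phi <= 1 /\ r = dnorm (Q phi)].
Proof.
have [C HC] := Q_bnd; exists `|C| => r [phi [hp [h1 ->]]].
apply: le_trans (HC _ hp) _; apply: le_trans (ler_norm _) _.
rewrite normrM -[X in _ <= X]mulr1; apply: ler_wpM2l => //.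
by rewrite ger0_norm.
Qed.

Lemma KQ_ge0 : 0 <= KQ.
Proof.
apply: le_trans (dnorm_ge0 (Q (fun _ => 0))) _.
apply: ub_le_sup; first exact: opnorm_hasub.
exists (fun _ => 0); split; first exact: dual_zero.
by split => //; apply: dnorm_le => // f _ _; rewrite normr0.
Qed.

Lemma Q_norm phi : dual phi -> dnorm (Q phi) <= KQ * dnorm phi.
Proof.
move=> hp.
have [c0|cn] := eqVneq (dnorm phi) 0.
  have -> : phi = (fun _ => 0).
    apply: (dual_ext hp dual_zero).
    move=> f hf /=; apply/eqP; rewrite -normr_le0.
    by have := dnorm_bound hp hf; rewrite c0 mul0r.
  rewrite Q0; apply: (@le_trans _ _ 0); first by apply: dnorm_le => // f _ _; rewrite normr0.
  by rewrite mulr_ge0 ?KQ_ge0 ?dnorm_ge0.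
have cp : 0 < dnorm phi by rewrite lt0r cn dnorm_ge0.
set c := dnorm phi.
have hp' : dual (fun f => c^-1 * phi f + (fun _ => 0) f) by apply: dual_lin => //; exact: dual_zero.
have Qp' : Q (fun f => c^-1 * phi f + (fun _ => 0) f) = (fun f => c^-1 * Q phi f).
  rewrite Q_lin //; last exact: dual_zero.
  by rewrite Q0; apply: funext => f; rewrite addr0.
have n1 : dnorm (fun f => c^-1 * phi f + (fun _ => 0) f) <= 1.
  apply: dnorm_le => // f hf h1; rewrite addr0 normrM ger0_norm; last by rewrite invr_ge0 ltW.
  rewrite mulrC ler_pdivrMr // mul1r; apply: le_trans (dnorm_bound hp hf) _.
  by rewrite -/c -[X in _ <= X]mulr1 ler_wpM2l // ltW.
have kb : dnorm (fun f => c^-1 * Q phi f) <= KQ.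
  rewrite -Qp'; apply: ub_le_sup; first exact: opnorm_hasub.
  by eexists; split; [exact: hp' | split; [exact: n1 | reflexivity]].
have hq : dual (fun f => c^-1 * Q phi f).
  have -> : (fun f => c^-1 * Q phi f) = (fun f => c^-1 * Q phi f + (fun _ => 0) f) by apply: funext => f; rewrite addr0.
  apply: dual_lin => //; [exact: Q_dual | exact: dual_zero].
apply: dnorm_le; first by rewrite mulr_ge0 ?KQ_ge0 // ltW.
move=> f hf h1.
have := dnorm_bound hq hf; rewrite normrM ger0_norm => [h|]; last by rewrite invr_ge0 ltW.
have h' : `|Q phi f| <= c * (dnorm (fun f => c^-1 * Q phi f) * lipnorm f).
  by have := ler_wpM2l (ltW cp) h; rewrite mulrA mulfV ?gt_eqF // mul1r.
apply: le_trans h' _; rewrite mulrC; apply: ler_wpM2r; first exact: ltW.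
apply: le_trans (_ : dnorm (fun f0 => c^-1 * Q phi f0) * 1 <= _).
  apply: ler_wpM2l => //; exact: dnorm_ge0.
by rewrite mulr1.
Qed.

Notation P := (@PG R G T d x0 act Q M).

Lemma P_free mu : free mu -> free (P mu).
Proof. by move=> hm; apply: Q_free; apply: dual_RG. Qed.

Lemma P_TS mu : free mu -> P mu = Tm (Sop mu).
Proof. by move=> hm; rewrite /Tm Rt_S. Qed.

Lemma Tm_free nu : freeq nu -> free (Tm nu).
Proof. by move=> hn; apply: Q_free; apply: dual_Rt; apply: free_dual. Qed.

Lemma Tm_lin (a : R) u v : freeq u -> freeq v ->
  Tm (fun f => a * u f + v f) = (fun f => a * Tm u f + Tm v f).
Proof.
by move=> hu hv; rewrite /Tm Rt_lin Q_lin //; apply: dual_Rt; apply: free_dual.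
Qed.

Lemma Tm_norm nu : freeq nu -> dnorm (Tm nu) <= KQ * dnormq nu.
Proof.
move=> hn; have hr := dual_Rt (free_dual hn).
apply: le_trans (Q_norm hr) _; apply: ler_wpM2l; first exact: KQ_ge0.
exact: dnorm_Rt (free_dual hn).
Qed.

Lemma P_inv mu : free mu -> forall g, Tdd g (P mu) = P mu.
Proof. by move=> hm; apply: Q_inv; [exact: dual_RG | move=> g; exact: RG_inv]. Qed.

Lemma P_idem mu : free mu -> P (P mu) = P mu.
Proof.
move=> hm; rewrite {1}/Defs.PG RG_fix; [|exact: P_free|exact: P_inv].
exact: Q_fix (P_free hm).
Qed.

Lemma Tm_inv nu : freeq nu -> forall g, Tdd g (Tm nu) = Tm nu.
Proof.
move=> hn; have hr := dual_Rt (free_dual hn).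
by apply: Q_inv => // g; apply: Rt_inv; apply: free_dual.
Qed.

Lemma P_Tm nu : freeq nu -> P (Tm nu) = Tm nu.
Proof.
move=> hn; rewrite /Defs.PG RG_fix; [|exact: Tm_free|exact: Tm_inv].
exact: Q_fix (Tm_free hn).
Qed.

Lemma P_lin (a : R) u v : free u -> free v -> P (fun f => a * u f + v f) = (fun f => a * P u f + P v f).
Proof.
move=> hu hv; rewrite !P_TS //; last exact: free_lin.
by rewrite S_lin Tm_lin //; apply: free_S.
Qed.

Variable Y : set (Qp -> R).
Hypothesis Y_lip : forall f, Y f -> lip0q f.
Hypothesis Y_sep : forall nu, freeq nu -> nu <> (fun _ => 0) -> exists f, Y f /\ nu f <> 0.
Hypothesis Y_ker : forall mu, free mu -> P mu = (fun _ => 0) -> forall f, Y f -> mu (Psi f) = 0.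

Lemma Y_zero nu : freeq nu -> (forall f, Y f -> nu f = 0) -> nu = (fun _ => 0).
Proof.
move=> hn H; have [//|nz] := pselect (nu = (fun _ => 0)).
by have [f [hf nf]] := Y_sep hn nz; exfalso; apply: nf; apply: H.
Qed.

Lemma S_P mu : free mu -> Sop (P mu) = Sop mu.
Proof.
move=> hm; have hp := P_free hm.
set nu := fun f => -1 * mu f + P mu f.
have hnu : free nu by apply: free_lin.
have Pn : P nu = (fun _ => 0).
  rewrite /nu P_lin // P_idem //; apply: funext => f; ring.
have Sn : Sop nu = (fun _ => 0).
  apply: Y_zero; first exact: free_S.
  by move=> f hf; rewrite SopE; [exact: (Y_ker hnu Pn hf) | exact: Y_lip].
apply: funext => f; have := congr1 (fun F => F f) Sn; rewrite /nu S_lin /=; lra.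
Qed.

Lemma S_Tm_span nu : span_delta dq q0 nu -> Sop (Tm nu) = nu.
Proof.
move=> [n [a [A ->]]].
set mu0 := fun f => \sum_(i < n) a i * delta (pickq (A i)) f.
have hm0 : free mu0 by apply: free_span; exists n, a, (fun i => pickq (A i)).
have eS : Sop mu0 = (fun f => \sum_(i < n) a i * deltaq (A i) f).
  rewrite /mu0 S_span; apply: funext => f; apply: eq_bigr => i _.
  by rewrite -pickq_cls.
by rewrite -eS -P_TS // S_P.
Qed.

Lemma S_Tm nu : freeq nu -> Sop (Tm nu) = nu.
Proof.
move=> hn; have dn := free_dual hn.
have hT := Tm_free hn.
apply: (@dual_ext R Qp dq q0); [exact: dual_S (free_dual hT) | exact: dn |].
move=> f hf; apply/eqP; rewrite -subr_eq0; apply/eqP; apply: le_eps_eq0 => eps he.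
set L := lipnormq f; have L0 : 0 <= L := lipnorm_ge0_q f.
set eta := eps / ((KQ + 1) * (L + 1)).
have KQ0 := KQ_ge0.
have heta : 0 < eta by rewrite divr_gt0 // mulr_gt0 // ltr_wpDl.
have [psi [sp Hd]] := proj2 hn _ heta.
have hps : freeq psi by apply: free_span_q.
have dps := free_dual hps.
have hw : freeq (fun f => -1 * psi f + nu f) by apply: (@L3.free_lin R Qp dq q0 dq_ge0).
have eT : (fun f => -1 * Tm psi f + Tm nu f) = Tm (fun f => -1 * psi f + nu f) by rewrite Tm_lin.
have -> : Sop (Tm nu) f - nu f = (Tm nu (Psi f) - Tm psi (Psi f)) + (psi f - nu f).
  rewrite SopE //; have := congr1 (fun F => F f) (S_Tm_span sp); rewrite SopE //= => ->; ring.
apply: le_trans (ler_normD _ _) _.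
have h1 : `|Tm nu (Psi f) - Tm psi (Psi f)| <= KQ * eta * L.
  have -> : Tm nu (Psi f) - Tm psi (Psi f) = Tm (fun f => -1 * psi f + nu f) (Psi f).
    by rewrite -eT; ring.
  apply: le_trans (dnorm_bound (free_dual (Tm_free hw)) (proj1 (Psi_lip0G hf))) _.
  apply: ler_pM; [exact: dnorm_ge0|exact: lipnorm_ge0| |by case: (Psi_lip hf)].
  apply: le_trans (Tm_norm hw) _; apply: ler_wpM2l => //.
  have -> : (fun f => -1 * psi f + nu f) = (fun f => nu f - psi f) by apply: funext => g; ring.
  exact: ltW.
have h2 : `|psi f - nu f| <= eta * L.
  rewrite distrC; apply: le_trans (approx_bound_q dn dps hf) _.
  by apply: ler_wpM2r => //; apply: ltW.
apply: le_trans (lerD h1 h2) _.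
have -> : KQ * eta * L + eta * L = eps * ((KQ + 1) * L) / ((KQ + 1) * (L + 1)).
  by rewrite /eta; field; rewrite !gt_eqF ?ltr_wpDl.
rewrite ler_pdivrMr ?mulr_gt0 ?ltr_wpDl // ler_wpM2l ?(ltW he) //.
rewrite ler_wpM2l ?addr_ge0 //; lra.
Qed.

Theorem abstract_main :
  (forall mu, free mu ->
     (P mu = (fun _ => 0) <-> perp d x0 lip0G mu)) /\
  (exists (Tm0 : ((Qp -> R) -> R) -> ((T -> R) -> R))
          (S : ((T -> R) -> R) -> ((Qp -> R) -> R)),
     lin_on freeq Tm0 /\
     (forall nu, freeq nu -> exists mu, free mu /\ Tm0 nu = P mu) /\
     (forall x, Tm0 (deltaq (cls x)) = P (delta x)) /\
     (forall nu, freeq nu -> dnorm (Tm0 nu) <= opnorm_dual d x0 Q * dnormq nu) /\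
     lin_on free S /\
     (forall mu, free mu -> freeq (S mu)) /\
     (forall x, S (delta x) = deltaq (cls x)) /\
     (forall mu, free mu -> dnormq (S mu) <= dnorm mu) /\
     (forall nu, freeq nu -> S (Tm0 nu) = nu) /\
     (forall mu, free mu -> Tm0 (S (P mu)) = P mu)) /\
  (lin_on free P /\
   (exists C : R, forall mu, free mu -> dnorm (P mu) <= C * dnorm mu) /\
   (forall mu, free mu -> free (P mu) /\ P (P mu) = P mu)).
Proof.
split.
  move=> mu hm; split.
    move=> P0; split => // F [hF hinv].
    have Sn : Sop mu = (fun _ => 0).
      apply: Y_zero; first exact: free_S.
      by move=> f hf; rewrite SopE; [exact: (Y_ker hm P0 hf) | exact: Y_lip].
    have := congr1 (fun G => G (sharp F)) Sn; rewrite /= SopE; last exact: sharp_lip0.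
    by rewrite Psi_sharp.
  move=> [_ hperp]; rewrite P_TS //.
  have -> : Sop mu = (fun _ => 0).
    apply: funext => f; have [hf|nf] := pselect (lip0q f); last by rewrite SopN.
    by rewrite SopE //; apply: hperp; apply: Psi_lip0G.
  rewrite /Tm.
  have -> : Rt (fun _ => 0) = (fun _ => 0).
    by apply: funext => f; have [hf|nf] := pselect (lip0 f); [rewrite RtE | rewrite RtN].
  exact: Q0.
split.
  exists Tm, Sop; split; first by move=> a u v hu hv; apply: Tm_lin.
  split; first by move=> nu hn; exists (Tm nu); split; [exact: Tm_free | rewrite P_Tm].
  split; first by move=> x; rewrite P_TS ?S_delta //; exact: free_delta.
  split; first exact: Tm_norm.
  split; first by move=> a u v hu hv; apply: S_lin.
  split; first exact: free_S.
  split; first exact: S_delta.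
  split; first by move=> mu hm; apply: dnorm_S; apply: free_dual.
  split; first exact: S_Tm.
  by move=> mu hm; rewrite -P_TS ?P_idem //; apply: P_free.
split; first by move=> a u v hu hv; apply: P_lin.
split.
  exists KQ => mu hm; rewrite P_TS //; apply: le_trans (Tm_norm (free_S hm)) _.
  by apply: ler_wpM2l; [exact: KQ_ge0 | apply: dnorm_S; apply: free_dual].
by move=> mu hm; split; [exact: P_free | exact: P_idem].
Qed.

End Act.

End L4.
Import L4.

Module L5.
Set Implicit Arguments. Unset Strict Implicit. Unset Printing Implicit Defensive.

Lemma cont_eps (R : realType) (G : topologicalType) (phi : G -> R) :
  (forall g (eps : R), 0 < eps -> exists U, nbhs g U /\ forall h, U h -> `|phi h - phi g| < eps) ->
  continuous phi.
Proof.
move=> H g; apply/cvgrPdist_lt => eps he.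
have [U [hU HU]] := H g eps he.
apply: filterS hU => h Uh; rewrite distrC; exact: HU.
Qed.

Lemma cont_eps2 (R : realType) (G : topologicalType) (phi : G -> R) :
  continuous phi ->
  (forall g (eps : R), 0 < eps -> exists U, nbhs g U /\ forall h, U h -> `|phi h - phi g| < eps).
Proof.
move=> H g eps he; have := H g; move/cvgrPdist_lt => /(_ eps he) hn.
exists [set h | `|phi g - phi h| < eps]; split => // h /=; by rewrite distrC.
Qed.

Lemma tri3 (R : realType) (a b c d : R) (eps : R) :
  `|a - b| <= eps / 3 -> `|b - c| < eps / 3 -> `|c - d| <= eps / 3 -> `|a - d| < eps.
Proof.
move=> h1 h2 h3.
have -> : a - d = (a - b) + ((b - c) + (c - d)) by ring.
apply: le_lt_trans (ler_normD _ _) _.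
have : `|(b - c) + (c - d)| < eps / 3 + eps / 3.
  apply: le_lt_trans (ler_normD _ _) _; rewrite addrC; exact: ler_ltD.
move=> h; have : `|a - b| + `|b - c + (c - d)| < eps / 3 + (eps / 3 + eps / 3) by exact: ler_ltD.
move=> h'; apply: lt_le_trans h' _; lra.
Qed.

Lemma lin2 (R : realType) (a x y u v eps : R) :
  `|x - y| < eps / (2 * (`|a| + 1)) -> `|u - v| < eps / 2 -> 0 < eps ->
  `|(a * x + u) - (a * y + v)| < eps.
Proof.
move=> h1 h2 he.
have -> : a * x + u - (a * y + v) = a * (x - y) + (u - v) by ring.
apply: le_lt_trans (ler_normD _ _) _; rewrite normrM.
have : `|a| * `|x - y| <= eps / 2.
  apply: le_trans (_ : (`|a| + 1) * `|x - y| <= _).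
    by apply: ler_wpM2r => //; lra.
  rewrite mulrC -ler_pdivlMr ?ltr_wpDl //; apply: ltW; apply: lt_le_trans h1 _.
  by rewrite invfM mulrA.
move=> h; have := ler_ltD h h2; move=> h'; apply: lt_le_trans h' _; lra.
Qed.

Section Dcases.
Context {R : realType} {G : topologicalType} (mul : G -> G -> G) (inv : G -> G) (e : G)
  {T : Type} (d : T -> T -> R) (x0 : T) (act : G -> T -> T).
Hypothesis dge0 : forall x y, 0 <= d x y.
Hypothesis d_refl : forall x, d x x = 0.
Hypothesis d_tri : forall x y z, d x z <= d x y + d y z.
Hypothesis act_e : forall x, act e x = x.
Hypothesis inv_l : forall g, mul (inv g) g = e.
Hypothesis act_mul : forall g h x, act (mul g h) x = act g (act h x).
Hypothesis act_iso : forall g x y, d (act g x) (act g y) = d x y.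
Hypothesis act_cont : forall g x (eps : R), 0 < eps -> exists U, nbhs g U /\ exists del : R, 0 < del /\
      forall h y, U h -> d y x < del -> d (act h y) (act g x) < eps.
Hypothesis orb : forall x, exists C : R, forall g, d (act g x) x <= C.

Lemma act_cont_pt g y (eps : R) : 0 < eps -> exists U, nbhs g U /\ forall h, U h -> d (act h y) (act g y) < eps.
Proof.
move=> he; have [U [hU [del [hdel H]]]] := act_cont g y he.
by exists U; split => // h Uh; apply: H => //; rewrite d_refl.
Qed.

Lemma lipL f : lip0 d x0 f -> exists L : R, 0 < L /\ forall x y, `|f x - f y| <= L * d x y.
Proof.
move=> [_ [L HL]]; exists (`|L| + 1); split; first by rewrite ltr_wpDl.
move=> x y; apply: le_trans (HL x y) _; apply: ler_wpM2r => //.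
apply: le_trans (ler_norm _) _; lra.
Qed.

Lemma bnd_act f y : lip0 d x0 f -> exists C : R, forall g, `|f (act g y)| <= C.
Proof.
move=> hf; have [L [hL HL]] := lipL hf; have [C HC] := orb y.
exists (L * (C + d y x0)) => g; rewrite -[f (act g y)]subr0 -(proj1 hf).
apply: le_trans (HL _ _) _; apply: ler_wpM2l; first exact: ltW.
apply: le_trans (d_tri _ y _) _; apply: lerD => //.
Qed.

Lemma bc_lin (a : R) (phi psi : G -> R) : bcont phi -> bcont psi -> bcont (fun g => a * phi g + psi g).
Proof.
move=> [c1 [C1 H1]] [c2 [C2 H2]]; split.
  apply: cont_eps => g eps he.
  have he1 : 0 < eps / (2 * (`|a| + 1)) by rewrite divr_gt0 // mulr_gt0 // ltr_wpDl.
  have he2 : 0 < eps / 2 by rewrite divr_gt0.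
  have [U1 [hU1 HU1]] := cont_eps2 c1 g he1.
  have [U2 [hU2 HU2]] := cont_eps2 c2 g he2.
  exists (U1 `&` U2); split; first exact: filterI.
  by move=> h [u1 u2]; apply: lin2 => //; [apply: HU1 | apply: HU2].
exists (`|a| * C1 + C2) => g; apply: le_trans (ler_normD _ _) _; rewrite normrM.
by apply: lerD => //; apply: ler_wpM2l.
Qed.

Lemma bc_const c : @bcont R G (fun _ => c).
Proof. by split; [exact: cst_continuous | exists `|c|]. Qed.

Lemma bc_act f y : lip0 d x0 f -> bcont (fun g => f (act g y)).
Proof.
move=> hf; split; last exact: bnd_act.
have [L [hL HL]] := lipL hf.
apply: cont_eps => g eps he.
have he' : 0 < eps / L by rewrite divr_gt0.
have [U [hU HU]] := act_cont_pt g y he'.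
exists U; split => // h Uh; apply: le_lt_trans (HL _ _) _.
by rewrite mulrC -ltr_pdivlMr //; apply: HU.
Qed.

Lemma bc_unif (phi : G -> R) : (forall eps : R, 0 < eps -> exists psi, bcont psi /\
   forall g, `|phi g - psi g| <= eps) -> bcont phi.
Proof.
move=> H; split.
  apply: cont_eps => g eps he.
  have he3 : 0 < eps / 3 by rewrite divr_gt0.
  have [psi [[cp _] Hp]] := H _ he3.
  have [U [hU HU]] := cont_eps2 cp g he3.
  exists U; split => // h Uh; apply: (@tri3 _ _ (psi h) (psi g)) => //; first exact: HU.
  by rewrite distrC.
have [psi [[_ [C HC]] Hp]] := H _ ltr01.
exists (C + 1) => g; rewrite -[phi g](subrK (psi g)).
apply: le_trans (ler_normD _ _) _; rewrite addrC; apply: lerD => //.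
Qed.

Hypothesis sin : SIN mul inv e.

Lemma bu_lin (a : R) (phi psi : G -> R) : buc mul e phi -> buc mul e psi -> buc mul e (fun g => a * phi g + psi g).
Proof.
move=> [[C1 H1] c1] [[C2 H2] c2]; split.
  exists (`|a| * C1 + C2) => g; apply: le_trans (ler_normD _ _) _; rewrite normrM.
  by apply: lerD => //; apply: ler_wpM2l.
move=> eps he.
have he1 : 0 < eps / (2 * (`|a| + 1)) by rewrite divr_gt0 // mulr_gt0 // ltr_wpDl.
have he2 : 0 < eps / 2 by rewrite divr_gt0.
have [U1 [hU1 HU1]] := c1 _ he1.
have [U2 [hU2 HU2]] := c2 _ he2.
exists (U1 `&` U2); split; first exact: filterI.
move=> g h [u1 u2]; have [a1 a2] := HU1 g h u1; have [b1 b2] := HU2 g h u2.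
by split; apply: lin2.
Qed.

Lemma bu_const (c : R) : buc mul e (fun _ => c).
Proof.
split; first by exists `|c|.
move=> eps he; exists setT; split; first exact: filterT.
by move=> g h _; rewrite subrr normr0.
Qed.

Lemma bu_act f y : lip0 d x0 f -> buc mul e (fun g => f (act g y)).
Proof.
move=> hf; split; first exact: bnd_act.
have [L [hL HL]] := lipL hf.
move=> eps he.
have he' : 0 < eps / L by rewrite divr_gt0.
have [U0 [hU0 HU0]] := act_cont_pt e y he'.
have [V [hV [VU Vinv]]] := sin hU0.
exists V; split => // g h Vh.
have key : forall v, V v -> `|f (act g (act v y)) - f (act g y)| < eps.
  move=> v Vv; apply: le_lt_trans (HL _ _) _; rewrite act_iso.
  rewrite mulrC -ltr_pdivlMr //; have := HU0 v (VU v Vv); by rewrite act_e.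
split; first by rewrite act_mul; apply: key.
have : [set mul (mul g v) (inv g) | v in V] h by rewrite Vinv.
move=> [v Vv hv]; rewrite -hv !act_mul -(act_mul (inv g)) inv_l act_e.
exact: key.
Qed.

Lemma bu_unif (phi : G -> R) : (forall eps : R, 0 < eps -> exists psi, buc mul e psi /\
   forall g, `|phi g - psi g| <= eps) -> buc mul e phi.
Proof.
move=> H; split.
  have [psi [[[C HC] _] Hp]] := H _ ltr01.
  exists (C + 1) => g; rewrite -[phi g](subrK (psi g)).
  apply: le_trans (ler_normD _ _) _; rewrite addrC; apply: lerD => //.
move=> eps he.
have he3 : 0 < eps / 3 by rewrite divr_gt0.
have [psi [[_ cp] Hp]] := H _ he3.
have [U [hU HU]] := cp _ he3.
exists U; split => // g h Uh; have [a1 a2] := HU g h Uh.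
split.
  apply: (@tri3 _ _ (psi (mul g h)) (psi g)) => //; by rewrite distrC.
apply: (@tri3 _ _ (psi (mul h g)) (psi g)) => //; by rewrite distrC.
Qed.

End Dcases.

End L5.
Import L5.

Unset Implicit Arguments.
Set Strict Implicit.

Theorem theorem4p7 (R : realType) (G : topologicalType) (mul : G -> G -> G)
  (inv : G -> G) (e : G) (T : Type) (d : T -> T -> R) (x0 : T)
  (act : G -> T -> T) (M : (G -> R) -> R)
  (Q : ((T -> R) -> R) -> ((T -> R) -> R))
  (Y : set (quot_pts d act -> R)) :
  is_metric d ->
  is_topgroup mul inv e -> hausdorff_space G ->
  isom_action mul e d act ->
  ((locally_compact [set: G] /\ bimean mul (@bcont R G) M) \/
   (SIN mul inv e /\ bimean mul (buc mul e) M)) ->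
  (* Q : X** -> X** bounded linear projection with range kappa_X(X) *)
  (forall phi, dual_elt d x0 phi -> dual_elt d x0 (Q phi)) ->
  lin_on (dual_elt d x0) Q ->
  (exists C : R, forall phi, dual_elt d x0 phi -> dnorm d x0 (Q phi) <= C * dnorm d x0 phi) ->
  (forall phi, dual_elt d x0 phi -> Q (Q phi) = Q phi) ->
  (forall phi, dual_elt d x0 phi -> free_elt d x0 (Q phi)) ->
  (forall mu, free_elt d x0 mu -> exists phi, dual_elt d x0 phi /\ Q phi = mu) ->
  (* T_g** (ker Q) ⊂ ker Q *)
  (forall g phi, dual_elt d x0 phi -> Q phi = (fun _ => 0) ->
      Q (Tdd d x0 act g phi) = (fun _ => 0)) ->
  (* Y ⊂ Lip_0(M/G) separates the points of F(M/G) *)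
  (forall f, Y f -> lip0 (dq d act) (cls d act x0) f) ->
  (forall nu, free_elt (dq d act) (cls d act x0) nu -> nu <> (fun _ => 0) ->
      exists f, Y f /\ nu f <> 0) ->
  (* ker P_G ⊂ Psi(Y)_perp *)
  (forall mu, free_elt d x0 mu -> PG d x0 act Q M mu = (fun _ => 0) ->
      forall f, Y f -> mu (Psi d act f) = 0) ->
  (* ker P_G = Lip_0^G(M)_perp *)
  (forall mu, free_elt d x0 mu ->
     (PG d x0 act Q M mu = (fun _ => 0) <-> perp d x0 (lip0G d x0 act) mu)) /\
  (* T : F(M/G) -> P_G[X] isomorphism with inverse S restricted to P_G[X] *)
  (exists (Tm : ((quot_pts d act -> R) -> R) -> ((T -> R) -> R))
          (S : ((T -> R) -> R) -> ((quot_pts d act -> R) -> R)),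
     lin_on (free_elt (dq d act) (cls d act x0)) Tm /\
     (forall nu, free_elt (dq d act) (cls d act x0) nu ->
        exists mu, free_elt d x0 mu /\ Tm nu = PG d x0 act Q M mu) /\
     (forall x, Tm (delta (dq d act) (cls d act x0) (cls d act x)) =
                PG d x0 act Q M (delta d x0 x)) /\
     (forall nu, free_elt (dq d act) (cls d act x0) nu ->
        dnorm d x0 (Tm nu) <= opnorm_dual d x0 Q * dnorm (dq d act) (cls d act x0) nu) /\
     lin_on (free_elt d x0) S /\
     (forall mu, free_elt d x0 mu -> free_elt (dq d act) (cls d act x0) (S mu)) /\
     (forall x, S (delta d x0 x) = delta (dq d act) (cls d act x0) (cls d act x)) /\
     (forall mu, free_elt d x0 mu ->
        dnorm (dq d act) (cls d act x0) (S mu) <= dnorm d x0 mu) /\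
     (forall nu, free_elt (dq d act) (cls d act x0) nu -> S (Tm nu) = nu) /\
     (forall mu, free_elt d x0 mu ->
        Tm (S (PG d x0 act Q M mu)) = PG d x0 act Q M mu)) /\
  (* P_G is a bounded linear projection of F(M) onto P_G[X] (complemented) *)
  (lin_on (free_elt d x0) (PG d x0 act Q M) /\
   (exists C : R, forall mu, free_elt d x0 mu ->
       dnorm d x0 (PG d x0 act Q M mu) <= C * dnorm d x0 mu) /\
   (forall mu, free_elt d x0 mu ->
       free_elt d x0 (PG d x0 act Q M mu) /\
       PG d x0 act Q M (PG d x0 act Q M mu) = PG d x0 act Q M mu)).
Proof.
move=> [dge0 [dsep [dsym dtri]]] [massoc [mlid [linv [cmul cinv]]]] _
  [ae [am [ai [acont aorb]]]] hcase Qd Ql Qb Qi Qf Qo Qk Yl Ys Yk.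
have drefl : forall x, d x x = 0 by move=> x; apply/(proj2 (dsep x x)).
case: hcase => [[_ HM] | [hsin HM]].
- apply: (@abstract_main R G mul inv e T d x0 act (@bcont R G) M _ _ _ _ _ _ _ _ _ _ HM Q _ _ _ _ _ _ _ Y) => //.
  + by move=> a phi psi; apply: bc_lin.
  + by move=> c; apply: bc_const.
  + move=> f y hf; exact: (bc_act dge0 drefl dtri acont aorb y hf).
  + by move=> phi; apply: bc_unif.
- apply: (@abstract_main R G mul inv e T d x0 act (@buc R G mul e) M _ _ _ _ _ _ _ _ _ _ HM Q _ _ _ _ _ _ _ Y) => //.
  + by move=> a phi psi; apply: bu_lin.
  + by move=> c; apply: bu_const.
  + move=> f y hf; exact: (bu_act dge0 drefl dtri ae linv am ai acont aorb hsin y hf).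
  + by move=> phi; apply: bu_unif.
Qed.
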